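(* Let $\mathcal{L}$ be an intuitionistic abstract logic. For all $z,a,b\in Expr_{\mathcal{L}}$: $z\le a\to b$ if and only if $z\wedge a\le b$.
   Context: An abstract logic is a triple $\mathcal{L}=(Expr_{\mathcal{L}},Th_{\mathcal{L}},\mathcal{C}_{\mathcal{L}})$ where $Expr_{\mathcal{L}}$ is a set, $Th_{\mathcal{L}}$ a non-empty set of subsets of $Expr_{\mathcal{L}}$ (theories) closed under intersections of non-empty subfamilies, and $\mathcal{C}_{\mathcal{L}}$ a set of operations on $Expr_{\mathcal{L}}$. $\mathcal{L}$ is closed under union of chains if the union of every non-empty chain of theories is a theory. A theory $T$ is prime if $T=\bigcap\mathcal{T}$ with $\mathcal{T}\subseteq Th_{\mathcal{L}}$ non-empty finite implies $T\in\mathcal{T}$; totally prime if this holds for non-empty $\mathcal{T}$ of any size. $PTh_{\mathcal{L}}$, $TPTh_{\mathcal{L}}$ denote these sets. An intuitionistic abstract logic is one closed under union of chains with binary connectives $\vee,\wedge,\to$ and constants $\top,\bot$ such that for all $a,b$ and all $T\in TPTh_{\mathcal{L}}$: $a\vee b\in T$ iff $a\in T$ or $b\in T$; $a\wedge b\in T$ iff $a,b\in T$; $a\to b\in T$ iff for every totally prime $T'\supseteq T$, $a\in T'$ implies $b\in T'$; $\top$ lies in every theory and $\bot$ in none. The order: $a\le b$ iff $S_a\subseteq S_b$, where $S_a=\{P\in PTh_{\mathcal{L}}: a\in P\}$. *)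

(* Defs.v *)
From Stdlib Require Import List.

Definition pset (X : Type) := X -> Prop.

Definition bigcap {X : Type} (F : pset (pset X)) : pset X :=
  fun x => forall T, F T -> T x.

Definition bigcup {X : Type} (F : pset (pset X)) : pset X :=
  fun x => exists T, F T /\ T x.

Definition subset {X : Type} (A B : pset X) : Prop := forall x, A x -> B x.

Definition nonempty {X : Type} (F : pset X) : Prop := exists T, F T.

Definition finite_fam {X : Type} (F : pset X) : Prop :=
  exists l : list X, forall T, F T <-> In T l.

Record abstract_logic := AbstractLogic {
  Expr : Type;
  Th : pset (pset Expr);
  C : pset { n : nat & (list Expr -> Expr) };
  Th_nonempty : nonempty Th;
  Th_cap : forall F : pset (pset Expr),
      subset F Th -> nonempty F -> Th (bigcap F)
}.

Definition is_chain {X : Type} (F : pset (pset X)) : Prop :=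
  forall A B, F A -> F B -> subset A B \/ subset B A.

Definition closed_under_union_of_chains (L : abstract_logic) : Prop :=
  forall F : pset (pset (Expr L)),
    subset F (Th L) -> nonempty F -> is_chain F -> Th L (bigcup F).

Definition prime_th (L : abstract_logic) (T : pset (Expr L)) : Prop :=
  Th L T /\
  forall F : pset (pset (Expr L)),
    subset F (Th L) -> nonempty F -> finite_fam F -> T = bigcap F -> F T.

Definition totally_prime_th (L : abstract_logic) (T : pset (Expr L)) : Prop :=
  Th L T /\
  forall F : pset (pset (Expr L)),
    subset F (Th L) -> nonempty F -> T = bigcap F -> F T.

Definition S_ (L : abstract_logic) (a : Expr L) : pset (pset (Expr L)) :=
  fun P => prime_th L P /\ P a.

Definition le_L (L : abstract_logic) (a b : Expr L) : Prop :=
  subset (S_ L a) (S_ L b).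

Record intuitionistic_logic (L : abstract_logic) := IntLogic {
  il_or : Expr L -> Expr L -> Expr L;
  il_and : Expr L -> Expr L -> Expr L;
  il_imp : Expr L -> Expr L -> Expr L;
  il_top : Expr L;
  il_bot : Expr L;
  il_chains : closed_under_union_of_chains L;
  il_or_spec : forall a b T, totally_prime_th L T ->
      (T (il_or a b) <-> T a \/ T b);
  il_and_spec : forall a b T, totally_prime_th L T ->
      (T (il_and a b) <-> T a /\ T b);
  il_imp_spec : forall a b T, totally_prime_th L T ->
      (T (il_imp a b) <->
       forall T', totally_prime_th L T' -> subset T T' -> T' a -> T' b);
  il_top_spec : forall T, Th L T -> T il_top;
  il_bot_spec : forall T, Th L T -> ~ T il_bot
}.

(* Main.v *)
Require Import Defs.
From Stdlib Require Import Classical FunctionalExtensionality PropExtensionality.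
From mathcomp Require Import all_boot.
From mathcomp Require Import boolp classical_sets.

Section Aux.
Variable L : abstract_logic.
Variable I : intuitionistic_logic L.

Lemma ext_tp (P0 : pset (Expr L)) (x : Expr L) :
  Th L P0 -> ~ P0 x ->
  exists T, totally_prime_th L T /\ Defs.subset P0 T /\ ~ T x.
Proof.
move=> ThP0 nx.
pose Ty := {S : pset (Expr L) | Th L S /\ Defs.subset P0 S /\ ~ S x}.
pose t0 : Ty := exist _ P0 (conj ThP0 (conj (fun _ h => h) nx)).
pose R (s t : Ty) := `[< Defs.subset (proj1_sig s) (proj1_sig t) >].
have [| | |t tmax] := @ZL_preorder Ty t0 R.
- by move=> s; apply/asboolP => y.
- move=> r s u /asboolP h1 /asboolP h2; apply/asboolP => y hy; auto.
- move=> A Atot.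
  case: (Classical_Prop.classic (exists s, A s)) => [[s0 As0]|nA]; last first.
    by exists t0 => s As; exfalso; apply: nA; exists s.
  pose F := fun S : pset (Expr L) => exists s, A s /\ proj1_sig s = S.
  have ThF : Th L (Defs.bigcup F).
    apply: (il_chains _ I).
    - by move=> S [s [_ <-]]; case: (proj2_sig s).
    - by exists (proj1_sig s0); exists s0.
    - move=> S1 S2 [s1 [As1 <-]] [s2 [As2 <-]].
      by case: (Atot _ _ As1 As2) => /asboolP h; [left|right].
  have sub : Defs.subset P0 (Defs.bigcup F).
    move=> y hy; exists (proj1_sig s0); split; first by exists s0.
    by case: (proj2_sig s0) => _ [h _]; apply: h.
  have nxF : ~ Defs.bigcup F x.
    move=> [S [[s [_ <-]] hs]]; by case: (proj2_sig s) => _ [_ h]; apply: h.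
  exists (exist _ (Defs.bigcup F) (conj ThF (conj sub nxF))) => s As.
  apply/asboolP => y hy /=; exists (proj1_sig s); split => //; by exists s.
exists (proj1_sig t); case: (proj2_sig t) => Tht [subt nxt].
split; last by split.
split => // F FTh [S0 FS0] eqt.
apply: NNPP => nFt.
apply: nxt; rewrite eqt => S FS.
apply: NNPP => nSx.
have ThS := FTh S FS.
have tS : Defs.subset (proj1_sig t) S by rewrite eqt => y hy; apply: hy.
pose s : Ty := exist _ S (conj ThS (conj (fun y h => tS y (subt y h)) nSx)).
have /asboolP St := tmax s (introT (asboolP _) tS).
have eq : S = proj1_sig t.
  apply: functional_extensionality => y; apply: propositional_extensionality.
  split; [apply: St | apply: tS].
by apply: nFt; rewrite -eq.
Qed.

Lemma tp_prime T : totally_prime_th L T -> prime_th L T.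
Proof. by move=> [h1 h2]; split => // F a b _ c; apply: h2. Qed.

Lemma mem_via_tp (P : pset (Expr L)) y :
  Th L P -> (forall T, totally_prime_th L T -> Defs.subset P T -> T y) -> P y.
Proof.
move=> ThP h; apply: NNPP => ny.
have [T [tT [sT nT]]] := ext_tp _ _ ThP ny.
by apply: nT; apply: h.
Qed.

Lemma le_tp a b : le_L L a b <-> forall T, totally_prime_th L T -> T a -> T b.
Proof.
split.
- move=> h T tT Ta; have [_ ] := h T (conj (tp_prime _ tT) Ta); done.
- move=> h P [pP Pa]; split => //; apply: mem_via_tp; first by case: pP.
  by move=> T tT sT; apply: h => //; apply: sT.
Qed.

End Aux.

Theorem lemma4p2 (L : abstract_logic) (I : intuitionistic_logic L)
  (z a b : Expr L) :
  le_L L z (il_imp L I a b) <-> le_L L (il_and L I z a) b.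
Proof.
rewrite !(@le_tp L I); split.
- move=> h T tT /(il_and_spec L I _ _ _ tT) [Tz Ta].
  by have /(il_imp_spec L I _ _ _ tT) := h T tT Tz; apply => // y hy.
- move=> h T tT Tz; apply/(il_imp_spec L I _ _ _ tT) => T' tT' sT Ta.
  by apply: h => //; apply/(il_and_spec L I _ _ _ tT'); split => //; apply: sT.
Qed.
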